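(* Let $M$ be a metric space with $\#M\ge3$ and $s(M)>0$. For each pair $i,j\in M$ let a real number $a_{ij}=a_{ji}$ be given with $a_{ii}=0$ and $|a_{ij}|<s(M)$; define $\rho(i,j)=|ij|+a_{ij}$ and $a=\sup_{i,j}|a_{ij}|$. Assume $a\le t(M)/3$. Then: (1) $\rho$ is a metric on $M$; (2) the metric space $M_\rho=(M,\rho)$ satisfies $d_{GH}(M,M_\rho)\le a/2$; (3) if in addition $a/2<\min\{s(M)/4,e(M)/4\}$, then $d_{GH}(M,M_\rho)=a/2$; (4) under the assumptions of (3), if $a_{ij}\in\{a,-a\}$ for all $i\ne j$, then $M_\rho\in S_{a/2}(M)$; moreover, if $a'_{ij}=a'_{ji}\in\{a,-a\}$ ($i\ne j$), $a'_{ii}=0$, is another such family with $\rho'(i,j)=|ij|+a'_{ij}$, and $\rho_t=(1-t)\rho+t\rho'$ for $t\in[0,1]$, then each $(M,\rho_t)$ is a metric space, the map $t\mapsto M^t:=(M,\rho_t)$ is a continuous curve in $\mathcal{GH}$, and if $a_{ij}=a'_{ij}$ for at least one pair $i\ne j$, then $M^t\in S_{a/2}(M)$ for all $t\in[0,1]$.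
   Context: For a metric space $M$ with $\#M\ge3$: $s(M)=\inf\{|xx'|: x\ne x'\}$; $t(M)=\inf\{|xx'|+|x'x''|-|xx''|: x,x',x''\text{ pairwise distinct}\}$; $S(M)$ is the set of bijections $M\to M$ and $e(M)=\inf\{\operatorname{dis}f: f\in S(M), f\ne\mathrm{id}\}$, where $\operatorname{dis}f=\sup_{x,x'}||xx'|-|f(x)f(x')||$. $d_{GH}$ is the Gromov–Hausdorff distance: $d_{GH}(X,Y)=\frac12\inf\{\operatorname{dis}R\}$ over correspondences $R\subset X\times Y$ (relations with both projections surjective), $\operatorname{dis}R=\sup\{||xx'|-|yy'||:(x,y),(x',y')\in R\}$. $\mathcal{GH}$ is the class (NBG sense) of isometry classes of all metric spaces; for each cardinal $n$ the subclass $\mathcal{GH}_n$ of spaces of cardinality at most $n$ is a set with topology based on open $d_{GH}$-balls, and a map from a topological space into $\mathcal{GH}$ is continuous if it is continuous into some (equivalently, every) $\mathcal{GH}_n$ containing its image. $S_r(X)=\{Y\in\mathcal{GH}: d_{GH}(X,Y)=r\}$. *)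

(* Defs.v *)
From Stdlib Require Import Reals.
From Coquelicot Require Import Coquelicot.
Open Scope R_scope.

Definition is_metric {X : Type} (d : X -> X -> R) : Prop :=
  (forall x y, d x y = 0 <-> x = y) /\
  (forall x y, d x y = d y x) /\
  (forall x y z, d x z <= d x y + d y z).

(* Bundled metric spaces (elements of the class GH, up to isometry). *)
Record MetricSpace := MkMetricSpace {
  ms_pt : Type;
  ms_d : ms_pt -> ms_pt -> R;
  ms_metric : is_metric ms_d }.

Definition card_ge3 (X : Type) : Prop :=
  exists x y z : X, x <> y /\ y <> z /\ x <> z.

Definition s_M {X : Type} (d : X -> X -> R) : Rbar :=
  Glb_Rbar (fun r => exists x x', x <> x' /\ r = d x x').

Definition t_M {X : Type} (d : X -> X -> R) : Rbar :=
  Glb_Rbar (fun r => exists x x' x'', x <> x' /\ x' <> x'' /\ x <> x'' /\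
                      r = d x x' + d x' x'' - d x x'').

Definition bijection {X : Type} (f : X -> X) : Prop :=
  (forall x y, f x = f y -> x = y) /\ (forall y, exists x, f x = y).

Definition dis_map {X : Type} (d : X -> X -> R) (f : X -> X) : Rbar :=
  Lub_Rbar (fun r => exists x x', r = Rabs (d x x' - d (f x) (f x'))).

Definition e_M {X : Type} (d : X -> X -> R) : Rbar :=
  Rbar_glb (fun v => exists f : X -> X, bijection f /\ (exists x, f x <> x) /\
                     v = dis_map d f).

Definition correspondence {X Y : Type} (Rel : X -> Y -> Prop) : Prop :=
  (forall x, exists y, Rel x y) /\ (forall y, exists x, Rel x y).

Definition dis_rel {X Y : Type} (dX : X -> X -> R) (dY : Y -> Y -> R)
  (Rel : X -> Y -> Prop) : Rbar :=
  Lub_Rbar (fun r => exists x x' y y', Rel x y /\ Rel x' y' /\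
                      r = Rabs (dX x x' - dY y y')).

Definition dGH {X Y : Type} (dX : X -> X -> R) (dY : Y -> Y -> R) : Rbar :=
  Rbar_mult (Finite (/ 2))
    (Rbar_glb (fun v => exists Rel : X -> Y -> Prop,
                 correspondence Rel /\ v = dis_rel dX dY Rel)).

Definition in_GH_sphere {X Y : Type} (dX : X -> X -> R) (r : R)
  (dY : Y -> Y -> R) : Prop := dGH dX dY = Finite r.

(* Continuity of t |-> (X, d t) from [0,1] into GH, whose topology has the
   open d_GH-balls { Y | d_GH(Z,Y) < r } as a base. *)
Definition GH_continuous_curve {X : Type} (d : R -> X -> X -> R) : Prop :=
  forall t0, 0 <= t0 <= 1 ->
  forall (Z : MetricSpace) (r : R),
    Rbar_lt (dGH (ms_d Z) (d t0)) (Finite r) ->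
    exists delta, 0 < delta /\
      forall t, 0 <= t <= 1 -> Rabs (t - t0) < delta ->
        Rbar_lt (dGH (ms_d Z) (d t)) (Finite r).

(* Main.v *)
Require Import Defs.
From Stdlib Require Import Reals Lra Classical ClassicalEpsilon FunctionalExtensionality.
From Coquelicot Require Import Coquelicot.
Open Scope R_scope.

Lemma glb_correct (E : Rbar -> Prop) : Rbar_is_glb E (Rbar_glb E).
Proof. unfold Rbar_glb. destruct (Rbar_ex_glb E); auto. Qed.

Lemma half_lt (G : Rbar) (r : R) :
  Rbar_lt (Rbar_mult (Finite (/2)) G) (Finite r) -> Rbar_lt G (Finite (2*r)).
Proof.
  destruct G as [g| |]; simpl; intros H.
  - lra.
  - destruct Rle_dec; [destruct Rle_lt_or_eq_dec|]; simpl in H; try lra; tauto.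
  - auto.
Qed.

Lemma half_lt' (G : Rbar) (r : R) :
  Rbar_lt G (Finite (2*r)) -> Rbar_lt (Rbar_mult (Finite (/2)) G) (Finite r).
Proof.
  destruct G as [g| |]; simpl; intros H.
  - lra.
  - tauto.
  - destruct Rle_dec; [destruct Rle_lt_or_eq_dec|]; simpl; try lra; auto.
Qed.

Lemma lub_ub (E : R -> Prop) x : E x -> Rbar_le (Finite x) (Lub_Rbar E).
Proof. intros. destruct (Lub_Rbar_correct E) as [H1 _]. apply H1; auto. Qed.

Lemma lub_le (E : R -> Prop) (c : R) : (forall x, E x -> x <= c) -> Rbar_le (Lub_Rbar E) (Finite c).
Proof. intros. destruct (Lub_Rbar_correct E) as [_ H2]. apply H2. intros x Hx; simpl; auto. Qed.

Lemma glb_lb (E : R -> Prop) x : E x -> Rbar_le (Glb_Rbar E) (Finite x).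
Proof. intros. destruct (Glb_Rbar_correct E) as [H1 _]. apply H1; auto. Qed.

Lemma lub_lt (E : R -> Prop) (b : R) : Rbar_lt (Lub_Rbar E) (Finite b) ->
  exists c, c < b /\ forall x, E x -> x <= c.
Proof.
  intros H. destruct (Lub_Rbar_correct E) as [H1 _].
  destruct (Lub_Rbar E) as [l| |] eqn:El; simpl in H.
  - exists l; split; [exact H|]. intros x Hx; specialize (H1 x Hx); simpl in H1; auto.
  - tauto.
  - exists (b-1); split; [lra|]. intros x Hx; specialize (H1 x Hx); simpl in H1; tauto.
Qed.

Lemma lub_exceed (E : R -> Prop) (a c : R) : Lub_Rbar E = Finite a -> c < a ->
  exists x, E x /\ c < x.
Proof.
  intros Ha Hc. apply NNPP; intro Hn.
  assert (Rbar_le (Lub_Rbar E) (Finite c)).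
  { apply lub_le. intros x Hx. apply Rnot_lt_le. intro. apply Hn; eauto. }
  rewrite Ha in H; simpl in H; lra.
Qed.

Lemma lub_gt (E : R -> Prop) (c : R) : Rbar_lt (Finite c) (Lub_Rbar E) ->
  exists x, E x /\ c < x.
Proof.
  intros H. apply NNPP; intro Hn.
  assert (Rbar_le (Lub_Rbar E) (Finite c)).
  { apply lub_le. intros x Hx. apply Rnot_lt_le. intro. apply Hn; eauto. }
  apply (Rbar_lt_not_le _ _ H H0).
Qed.

Lemma metric_lemma {M : Type} (d rho B : M -> M -> R) (b s0 : R) :
  is_metric d -> (forall x y, x <> y -> s0 <= d x y) ->
  (forall i j, rho i j = d i j + B i j) ->
  (forall i j, B i j = B j i) -> (forall i, B i i = 0) ->
  (forall i j, Rabs (B i j) <= b) -> (forall i j, Rabs (B i j) < s0) ->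
  (forall x y z, x <> y -> y <> z -> x <> z -> 3 * b <= d x y + d y z - d x z) ->
  is_metric rho.
Proof.
  intros [Hd0 [Hds Hdt]] Hs Hr Hsym Hdiag Hb Hbs Ht.
  assert (Hab : forall i j, - b <= B i j <= b).
  { intros i j; specialize (Hb i j); unfold Rabs in Hb; destruct Rcase_abs; lra. }
  assert (Hpos : forall x y, x <> y -> 0 < rho x y).
  { intros x y Hxy. rewrite Hr. specialize (Hs x y Hxy). specialize (Hbs x y).
    unfold Rabs in Hbs; destruct Rcase_abs in Hbs; lra. }
  assert (Hxx : forall x, rho x x = 0).
  { intros x. rewrite Hr, Hdiag. assert (d x x = 0) by (apply Hd0; auto). lra. }
  assert (Hnn : forall x y, 0 <= rho x y).
  { intros x y. destruct (classic (x = y)) as [->|H]. rewrite Hxx; lra. left; auto. }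
  split; [|split].
  - intros x y; split.
    + intros H. apply NNPP; intro Hn. specialize (Hpos x y Hn). lra.
    + intros ->. apply Hxx.
  - intros x y. rewrite !Hr, Hds, Hsym; auto.
  - intros x y z.
    destruct (classic (x = y)) as [->|Hxy]. { rewrite Hxx; lra. }
    destruct (classic (y = z)) as [->|Hyz]. { rewrite Hxx; lra. }
    destruct (classic (x = z)) as [->|Hxz].
    { rewrite Hxx. pose proof (Hnn z y); pose proof (Hnn y z). lra. }
    rewrite !Hr. specialize (Ht x y z Hxy Hyz Hxz).
    pose proof (Hab x y); pose proof (Hab y z); pose proof (Hab x z). lra.
Qed.

Definition Sset {X Y : Type} (dX : X -> X -> R) (dY : Y -> Y -> R) :=
  fun v => exists Rel : X -> Y -> Prop, correspondence Rel /\ v = dis_rel dX dY Rel.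

Lemma dis_rel_nonneg {X Y : Type} (dX : X -> X -> R) (dY : Y -> Y -> R) Rel (x0 : X) :
  correspondence Rel -> Rbar_le (Finite 0) (dis_rel dX dY Rel).
Proof.
  intros [H1 H2]. destruct (H1 x0) as [y0 Hy].
  eapply Rbar_le_trans; [| apply lub_ub; exists x0, x0, y0, y0; split; [exact Hy| split; [exact Hy|reflexivity]]].
  simpl. apply Rabs_pos.
Qed.

Lemma glb_nonneg {X Y : Type} (dX : X -> X -> R) (dY : Y -> Y -> R) (x0 : X) :
  Rbar_le (Finite 0) (Rbar_glb (Sset dX dY)).
Proof.
  destruct (glb_correct (Sset dX dY)) as [_ H]. apply H.
  intros v [Rel [HR ->]]. apply dis_rel_nonneg; auto.
Qed.

Lemma glb_le_id {M : Type} (d rho B : M -> M -> R) (b : R) :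
  (forall i j, rho i j = d i j + B i j) -> (forall i j, Rabs (B i j) <= b) ->
  Rbar_le (Rbar_glb (Sset d rho)) (Finite b).
Proof.
  intros Hr Hb. destruct (glb_correct (Sset d rho)) as [H _].
  eapply Rbar_le_trans. apply H. exists (fun x y => x = y). split; [|reflexivity].
  split; intros x; exists x; auto.
  apply lub_le. intros r [x [x' [y [y' [-> [-> ->]]]]]].
  rewrite Hr. replace (d y y' - (d y y' + B y y')) with (- B y y') by ring.
  rewrite Rabs_Ropp; auto.
Qed.

Lemma dGH_le_lemma {M : Type} (d rho B : M -> M -> R) (b : R) (x0 : M) :
  (forall i j, rho i j = d i j + B i j) -> (forall i j, Rabs (B i j) <= b) ->
  Rbar_le (dGH d rho) (Finite (b / 2)).
Proof.
  intros Hr Hb. pose proof (glb_le_id d rho B b Hr Hb) as H1.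
  pose proof (glb_nonneg d rho x0) as H2.
  unfold dGH. fold (Sset d rho).
  destruct (Rbar_glb (Sset d rho)) as [g| |]; simpl in *; try tauto. lra.
Qed.

Lemma lower_bound {M : Type} (d rho B : M -> M -> R) (b s0 : R) :
  is_metric d -> (forall x y, x <> y -> s0 <= d x y) ->
  (forall i j, rho i j = d i j + B i j) ->
  (forall i, B i i = 0) -> (forall i j, Rabs (B i j) <= b) -> 0 <= b ->
  (forall c, c < b -> exists i j, c < Rabs (B i j)) ->
  b < s0 / 2 ->
  (forall f, bijection f -> (exists x, f x <> x) ->
     exists x x', 2 * b < Rabs (d x x' - d (f x) (f x'))) ->
  forall Rel, correspondence Rel -> Rbar_le (Finite b) (dis_rel d rho Rel).
Proof.
  intros [Hd0 [Hds Hdt]] Hs Hr Hdiag Hb Hb0 Hsup Hbs He Rel [Htot Hsur].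
  apply NNPP; intro Hn. apply Rbar_not_le_lt in Hn.
  destruct (lub_lt _ _ Hn) as [c [Hcb Hc]].
  assert (HR : forall x x' y y', Rel x y -> Rel x' y' -> Rabs (d x x' - rho y y') <= c).
  { intros x x' y y' H1 H2. apply Hc. exists x, x', y, y'; auto. }
  assert (Hab : forall i j, - b <= B i j <= b).
  { intros i j; specialize (Hb i j); unfold Rabs in Hb; destruct Rcase_abs; lra. }
  assert (Hdxx : forall x, d x x = 0) by (intros; apply Hd0; auto).
  assert (Hfun : forall x y y', Rel x y -> Rel x y' -> y = y').
  { intros x y y' H1 H2. apply NNPP; intro Hyy. specialize (HR x x y y' H1 H2).
    rewrite Hdxx, Hr in HR. specialize (Hs y y' Hyy). specialize (Hab y y').
    rewrite Rabs_left1 in HR by lra. lra. }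
  assert (Hinj : forall x x' y, Rel x y -> Rel x' y -> x = x').
  { intros x x' y H1 H2. apply NNPP; intro Hxx. specialize (HR x x' y y H1 H2).
    rewrite Hr, Hdxx, Hdiag in HR. specialize (Hs x x' Hxx).
    rewrite Rabs_right in HR by lra. lra. }
  set (f := fun x => proj1_sig (constructive_indefinite_description _ (Htot x))).
  assert (Hf : forall x, Rel x (f x)).
  { intros x. unfold f. destruct (constructive_indefinite_description _ (Htot x)); auto. }
  assert (Hbij : bijection f).
  { split.
    - intros x y Hxy. apply (Hinj x y (f x)); auto. rewrite Hxy; auto.
    - intros y. destruct (Hsur y) as [x Hx]. exists x. eapply Hfun; eauto. }
  destruct (classic (exists x, f x <> x)) as [Hne|Hid].
  - destruct (He f Hbij Hne) as [x [x' Hxx]].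
    specialize (HR x x' (f x) (f x') (Hf x) (Hf x')). rewrite Hr in HR.
    specialize (Hab (f x) (f x')).
    revert HR Hxx. unfold Rabs. repeat destruct Rcase_abs; intros; lra.
  - destruct (Hsup c Hcb) as [i [j Hij]].
    assert (Hfi : forall x, f x = x).
    { intros x. apply NNPP; intro. apply Hid; eauto. }
    pose proof (Hf i) as Hi. pose proof (Hf j) as Hj. rewrite Hfi in Hi, Hj.
    specialize (HR i j i j Hi Hj). rewrite Hr in HR.
    replace (d i j - (d i j + B i j)) with (- B i j) in HR by ring.
    rewrite Rabs_Ropp in HR. lra.
Qed.

Lemma dGH_eq_lemma {M : Type} (d rho B : M -> M -> R) (b s0 : R) :
  is_metric d -> (forall x y, x <> y -> s0 <= d x y) ->
  (forall i j, rho i j = d i j + B i j) ->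
  (forall i, B i i = 0) -> (forall i j, Rabs (B i j) <= b) -> 0 <= b ->
  (forall c, c < b -> exists i j, c < Rabs (B i j)) ->
  b < s0 / 2 ->
  (forall f, bijection f -> (exists x, f x <> x) ->
     exists x x', 2 * b < Rabs (d x x' - d (f x) (f x'))) ->
  dGH d rho = Finite (b / 2).
Proof.
  intros Hd Hs Hr Hdiag Hb Hb0 Hsup Hbs He.
  assert (G1 := glb_le_id d rho B b Hr Hb).
  assert (G2 : Rbar_le (Finite b) (Rbar_glb (Sset d rho))).
  { destruct (glb_correct (Sset d rho)) as [_ H]. apply H.
    intros v [Rel [HR ->]]. eapply lower_bound; eauto. }
  unfold dGH. fold (Sset d rho).
  destruct (Rbar_glb (Sset d rho)) as [g| |]; simpl in *; try tauto.
  f_equal. assert (g = b) by lra. subst; field.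
Qed.

Lemma cont_lemma {M : Type} (rhot : R -> M -> M -> R) (K : R) :
  0 <= K ->
  (forall t t0 m m', Rabs (rhot t m m' - rhot t0 m m') <= K * Rabs (t - t0)) ->
  GH_continuous_curve rhot.
Proof.
  intros HK HL t0 Ht0 Z r H. unfold dGH in H. apply half_lt in H.
  fold (Sset (ms_d Z) (rhot t0)) in H.
  assert (Hv : exists v, Sset (ms_d Z) (rhot t0) v /\ Rbar_lt v (Finite (2 * r))).
  { apply NNPP; intro Hn. destruct (glb_correct (Sset (ms_d Z) (rhot t0))) as [_ Hg].
    assert (Rbar_le (Finite (2*r)) (Rbar_glb (Sset (ms_d Z) (rhot t0)))).
    { apply Hg. intros v Hv. apply Rbar_not_lt_le. intro. apply Hn; eauto. }
    apply (Rbar_lt_not_le _ _ H H0). }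
  destruct Hv as [v [[Rel [HRel ->]] Hlt]].
  destruct (lub_lt _ _ Hlt) as [c [Hc Hcb]].
  exists ((2 * r - c) / (2 * (K + 1))). split.
  { apply Rdiv_lt_0_compat; lra. }
  intros t Ht Htt. unfold dGH. apply half_lt'. fold (Sset (ms_d Z) (rhot t)).
  destruct (glb_correct (Sset (ms_d Z) (rhot t))) as [Hg _].
  eapply Rbar_le_lt_trans. apply Hg. exists Rel; split; [exact HRel|reflexivity].
  eapply Rbar_le_lt_trans. apply (lub_le _ (c + (2 * r - c) / 2)).
  - intros x [z [z' [y [y' [H1 [H2 ->]]]]]].
    assert (E1 : Rabs (ms_d Z z z' - rhot t0 y y') <= c) by (apply Hcb; exists z, z', y, y'; auto).
    specialize (HL t t0 y y').
    assert (E2 : K * Rabs (t - t0) <= (2 * r - c) / 2).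
    { apply Rle_trans with (K * ((2 * r - c) / (2 * (K + 1)))).
      apply Rmult_le_compat_l; lra.
      unfold Rdiv. rewrite Rinv_mult.
      assert (0 < / (K+1)) by (apply Rinv_0_lt_compat; lra).
      assert (K * / (K+1) <= 1).
      { apply Rmult_le_reg_r with (K+1). lra. rewrite Rmult_assoc, Rinv_l by lra. lra. }
      assert (0 <= (2 * r - c) * / 2) by lra.
      replace (K * ((2 * r - c) * (/ 2 * / (K + 1)))) with ((K * / (K+1)) * ((2 * r - c) * / 2)) by ring.
      pattern ((2 * r - c) * / 2) at 2; rewrite <- Rmult_1_l.
      apply Rmult_le_compat_r; lra. }
    replace (ms_d Z z z' - rhot t y y') with ((ms_d Z z z' - rhot t0 y y') - (rhot t y y' - rhot t0 y y')) by ring.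
    eapply Rle_trans. apply Rabs_triang. rewrite Rabs_Ropp. lra.
  - simpl. lra.
Qed.

Lemma min_lemma (x u : R) (e : Rbar) :
  Rbar_lt (Finite x) (Rbar_min (Finite u) (Rbar_div e (Finite 4))) ->
  x < u /\ Rbar_lt (Finite (4 * x)) e.
Proof.
  destruct e as [e| |]; simpl.
  - unfold Rmin; destruct Rle_dec; intros; split; lra.
  - destruct Rle_dec as [r|r]; [destruct Rle_lt_or_eq_dec as [r'|r']|]; simpl; intros;
      try (exfalso; lra); try (exfalso; apply r; lra); split; simpl; auto.
  - destruct Rle_dec as [r|r]; [destruct Rle_lt_or_eq_dec as [r'|r']|]; simpl; intros;
      try (exfalso; lra); try (exfalso; apply r; lra); tauto.
Qed.

Lemma div3_lemma (a : R) (t : Rbar) :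
  Rbar_le (Finite a) (Rbar_div t (Finite 3)) -> t <> p_infty -> exists t0, t = Finite t0 /\ 3 * a <= t0.
Proof.
  destruct t as [t| |]; simpl; intros H Hn.
  - exists t; split; auto. lra.
  - congruence.
  - revert H. destruct Rle_dec as [r|r]; [destruct Rle_lt_or_eq_dec as [r'|r']|].
    + intros [].
    + exfalso; lra.
    + exfalso; apply r; lra.
Qed.

Theorem lemma10 (M : Type) (d : M -> M -> R) (A : M -> M -> R) (a : R) :
  is_metric d ->
  card_ge3 M ->
  Rbar_lt (Finite 0) (s_M d) ->
  (forall i j, A i j = A j i) ->
  (forall i, A i i = 0) ->
  (forall i j, Rbar_lt (Finite (Rabs (A i j))) (s_M d)) ->
  Lub_Rbar (fun r => exists i j, r = Rabs (A i j)) = Finite a ->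
  Rbar_le (Finite a) (Rbar_div (t_M d) (Finite 3)) ->
  let rho := fun i j => d i j + A i j in
  (* (1) *) is_metric rho /\
  (* (2) *) Rbar_le (dGH d rho) (Finite (a / 2)) /\
  (Rbar_lt (Finite (a / 2))
     (Rbar_min (Rbar_div (s_M d) (Finite 4)) (Rbar_div (e_M d) (Finite 4))) ->
   (* (3) *) dGH d rho = Finite (a / 2) /\
   (* (4) *)
   ((forall i j, i <> j -> A i j = a \/ A i j = - a) ->
    in_GH_sphere d (a / 2) rho /\
    forall A' : M -> M -> R,
      (forall i j, A' i j = A' j i) ->
      (forall i, A' i i = 0) ->
      (forall i j, i <> j -> A' i j = a \/ A' i j = - a) ->
      let rho' := fun i j => d i j + A' i j in
      let rho_t := fun t i j => (1 - t) * rho i j + t * rho' i j in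
      (forall t, 0 <= t <= 1 -> is_metric (rho_t t)) /\
      GH_continuous_curve rho_t /\
      ((exists i j, i <> j /\ A i j = A' i j) ->
       forall t, 0 <= t <= 1 -> in_GH_sphere d (a / 2) (rho_t t)))).
Proof.
  intros Hd H3 Hs Hsym Hdiag Hlt Ha Ht rho.
  destruct H3 as [x0 [y0 [z0 [Hxy0 [Hyz0 Hxz0]]]]].
  assert (Hsx : forall x y, x <> y -> Rbar_le (s_M d) (Finite (d x y))).
  { intros x y Hxy. apply glb_lb. exists x, y; auto. }
  destruct (s_M d) as [s0| |] eqn:Es.
  2:{ specialize (Hsx x0 y0 Hxy0). simpl in Hsx; tauto. }
  2:{ simpl in Hs; tauto. }
  simpl in Hs, Hsx.
  assert (HA : forall i j, Rabs (A i j) < s0) by (intros; specialize (Hlt i j); simpl in Hlt; auto).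
  assert (Hab : forall i j, Rabs (A i j) <= a).
  { intros i j. pose proof (lub_ub (fun r => exists i j, r = Rabs (A i j)) (Rabs (A i j))) as H.
    rewrite Ha in H. simpl in H. apply H; eauto. }
  assert (Ha0 : 0 <= a) by (specialize (Hab x0 x0); pose proof (Rabs_pos (A x0 x0)); lra).
  assert (Hsup : forall c, c < a -> exists i j, c < Rabs (A i j)).
  { intros c Hc. destruct (lub_exceed _ a c Ha Hc) as [x [[i [j ->]] Hx]]. eauto. }
  assert (Htx : forall x y z, x <> y -> y <> z -> x <> z ->
            Rbar_le (t_M d) (Finite (d x y + d y z - d x z))).
  { intros x y z H1 H2 H3. apply glb_lb. exists x, y, z; auto. }
  destruct (div3_lemma a (t_M d) Ht) as [t0 [Et Ht0]].
  { intros E. specialize (Htx x0 y0 z0 Hxy0 Hyz0 Hxz0). rewrite E in Htx. simpl in Htx; tauto. }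
  rewrite Et in Htx. simpl in Htx.
  assert (H3a : forall x y z, x <> y -> y <> z -> x <> z -> 3 * a <= d x y + d y z - d x z).
  { intros x y z H1 H2 H3. specialize (Htx x y z H1 H2 H3). lra. }
  assert (Hrho : forall i j, rho i j = d i j + A i j) by reflexivity.
  split; [|split].
  { eapply metric_lemma; eauto. }
  { eapply dGH_le_lemma; eauto. }
  intros Hmin.
  replace (Rbar_div (Finite s0) (Finite 4)) with (Finite (s0 / 4)) in Hmin by reflexivity.
  destruct (min_lemma _ _ _ Hmin) as [Has He].
  assert (Has2 : a < s0 / 2) by lra.
  assert (Hef : forall f, bijection f -> (exists x, f x <> x) ->
     exists x x', 2 * a < Rabs (d x x' - d (f x) (f x'))).
  { intros f Hf Hne.
    assert (Hle : Rbar_le (e_M d) (dis_map d f)).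
    { unfold e_M. destruct (glb_correct (fun v => exists f : M -> M, bijection f /\ (exists x, f x <> x) /\
                     v = dis_map d f)) as [Hg _]. apply Hg. eauto. }
    assert (Hl : Rbar_lt (Finite (2 * a)) (dis_map d f)).
    { eapply Rbar_lt_le_trans; [|exact Hle]. eapply Rbar_le_lt_trans; [|exact He]. simpl; lra. }
    destruct (lub_gt _ _ Hl) as [r [[x [x' ->]] Hr]]. eauto. }
  assert (Hmain : dGH d rho = Finite (a / 2)).
  { eapply dGH_eq_lemma; eauto. }
  split; [exact Hmain|].
  intros Hpm. split; [exact Hmain|].
  intros A' Hsym' Hdiag' Hpm' rho' rho_t.
  assert (Hab' : forall i j, Rabs (A' i j) <= a).
  { intros i j. destruct (classic (i = j)) as [->|Hij].
    rewrite Hdiag', Rabs_R0; lra.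
    destruct (Hpm' i j Hij) as [-> | ->]; [|rewrite Rabs_Ropp]; rewrite Rabs_right; lra. }
  set (Bt := fun t i j => (1 - t) * A i j + t * A' i j).
  assert (Hrt : forall t i j, rho_t t i j = d i j + Bt t i j).
  { intros. unfold rho_t, rho, rho', Bt. ring. }
  assert (HBt : forall t, 0 <= t <= 1 -> forall i j, Rabs (Bt t i j) <= a).
  { intros t Ht01 i j. unfold Bt. eapply Rle_trans. apply Rabs_triang.
    rewrite !Rabs_mult, (Rabs_right (1 - t)), (Rabs_right t) by lra.
    specialize (Hab i j). specialize (Hab' i j).
    apply Rle_trans with ((1 - t) * a + t * a); [|lra].
    apply Rplus_le_compat; apply Rmult_le_compat_l; lra. }
  split; [|split].
  - intros t Ht01. eapply (metric_lemma d (rho_t t) (Bt t) a s0); eauto.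
    + intros i j; unfold Bt; rewrite Hsym, Hsym'; auto.
    + intros i; unfold Bt; rewrite Hdiag, Hdiag'; ring.
    + intros i j. specialize (HBt t Ht01 i j). lra.
  - apply (cont_lemma rho_t (2 * a)). lra.
    intros t t1 m m'. rewrite !Hrt. unfold Bt.
    replace (d m m' + ((1 - t) * A m m' + t * A' m m') - (d m m' + ((1 - t1) * A m m' + t1 * A' m m')))
      with ((t - t1) * (A' m m' - A m m')) by ring.
    rewrite Rabs_mult, Rmult_comm. apply Rmult_le_compat_r. apply Rabs_pos.
    unfold Rminus. eapply Rle_trans. apply Rabs_triang. rewrite Rabs_Ropp.
    specialize (Hab m m'); specialize (Hab' m m'). lra.
  - intros [i0 [j0 [Hij0 Heq]]] t Ht01. unfold in_GH_sphere.
    eapply (dGH_eq_lemma d (rho_t t) (Bt t) a s0); eauto.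
    + intros i; unfold Bt; rewrite Hdiag, Hdiag'; ring.
    + intros c Hc. exists i0, j0. unfold Bt. rewrite <- Heq.
      replace ((1 - t) * A i0 j0 + t * A i0 j0) with (A i0 j0) by ring.
      destruct (Hpm i0 j0 Hij0) as [-> | ->]; [|rewrite Rabs_Ropp]; rewrite Rabs_right; lra.
Qed.
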